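(* Let $P,P',Q,S,\gamma$ be programs and $B$ a Boolean expression such that $P'\equiv_B(P,B)$ and $Q\equiv_B(P,\neg B)$. If the operational triple $\{|P'|\}\ S\ \{|\gamma;P|\}$ holds, then $\{|P|\}\ \mathbf{while}\ (B)\ \mathbf{do}\ S\ \mathbf{elihw}\ \{|Q|\}$ holds.
   Context: Programs are statements of a sequential imperative language with a standard small-step operational semantics over program states. $\mathrm{behs}(P)$ is the set of pairs (initial state, final state) of finite terminating executions of $P$; $(s,u)\in\mathrm{behs}(P;Q)$ iff there is $t$ with $(s,t)\in\mathrm{behs}(P)$ and $(t,u)\in\mathrm{behs}(Q)$. For a state $s$ and Boolean expression $B$, $s(B)\in\{\mathit{tt},\mathit{ff}\}$ is the (side-effect-free) value of $B$ in $s$. The loop $\mathbf{while}\ (B)\ \mathbf{do}\ S\ \mathbf{elihw}$ started in state $s$ terminates in $s$ if $s(B)=\mathit{ff}$, and otherwise executes $S$ and then repeats the loop from the resulting state. The post-state set is $\mathrm{pst}(P)=\{t:\exists s,\ (s,t)\in\mathrm{behs}(P)\}$. The operational triple $\{|P|\}\ S\ \{|Q|\}$ means $\mathrm{pst}(P;S)\subseteq\mathrm{pst}(Q)$. For programs $P',P$ and Boolean expression $B$, $P'\equiv_B(P,B)$ means $\mathrm{pst}(P')=\mathrm{pst}(P)\cap\{s : s(B)=\mathit{tt}\}$. *)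

(* Defs.v *)
From Stdlib Require Import ZArith Relations.

Definition var := nat.
Definition state := var -> Z.
Definition aexp := state -> Z.
Definition bexp := state -> bool.

Definition bnot (B : bexp) : bexp := fun s => negb (B s).

Definition update (s : state) (x : var) (v : Z) : state :=
  fun y => if Nat.eqb y x then v else s y.

Inductive stmt : Type :=
| Skip : stmt
| Assign : var -> aexp -> stmt
| Havoc : var -> stmt
| Seq : stmt -> stmt -> stmt
| If : bexp -> stmt -> stmt -> stmt
| While : bexp -> stmt -> stmt.

Inductive step : stmt * state -> stmt * state -> Prop :=
| st_assign : forall x a s, step (Assign x a, s) (Skip, update s x (a s))
| st_havoc : forall x v s, step (Havoc x, s) (Skip, update s x v)
| st_seq_skip : forall c s, step (Seq Skip c, s) (c, s)
| st_seq : forall c1 c1' c2 s s',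
    step (c1, s) (c1', s') -> step (Seq c1 c2, s) (Seq c1' c2, s')
| st_if_true : forall b c1 c2 s, b s = true -> step (If b c1 c2, s) (c1, s)
| st_if_false : forall b c1 c2 s, b s = false -> step (If b c1 c2, s) (c2, s)
| st_while : forall b c s,
    step (While b c, s) (If b (Seq c (While b c)) Skip, s).

Definition steps := clos_refl_trans (stmt * state) step.

Definition behs (P : stmt) (s t : state) : Prop := steps (P, s) (Skip, t).

Definition pst (P : stmt) (t : state) : Prop := exists s, behs P s t.

Definition op_triple (P S Q : stmt) : Prop :=
  forall t, pst (Seq P S) t -> pst Q t.

Definition equiv_B (P' P : stmt) (B : bexp) : Prop :=
  forall t, pst P' t <-> (pst P t /\ B t = true).

(* Main.v *)
Require Import Defs.
From Stdlib Require Import ZArith Relations.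

Inductive eval : stmt -> state -> state -> Prop :=
| E_Skip : forall s, eval Skip s s
| E_Assign : forall x a s, eval (Assign x a) s (update s x (a s))
| E_Havoc : forall x v s, eval (Havoc x) s (update s x v)
| E_Seq : forall c1 c2 s t u, eval c1 s t -> eval c2 t u -> eval (Seq c1 c2) s u
| E_IfT : forall b c1 c2 s t, b s = true -> eval c1 s t -> eval (If b c1 c2) s t
| E_IfF : forall b c1 c2 s t, b s = false -> eval c2 s t -> eval (If b c1 c2) s t
| E_WhileF : forall b c s, b s = false -> eval (While b c) s s
| E_WhileT : forall b c s t u, b s = true -> eval c s t -> eval (While b c) t u ->
    eval (While b c) s u.

Lemma step_eval : forall p q, step p q -> forall u, eval (fst q) (snd q) u -> eval (fst p) (snd p) u.
Proof.
  intros p q H; induction H; simpl; intros u E.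
  - inversion E; subst; constructor.
  - inversion E; subst; constructor.
  - econstructor; [constructor|exact E].
  - inversion E; subst. econstructor; [apply IHstep; simpl; eassumption| eassumption].
  - apply E_IfT; auto.
  - apply E_IfF; auto.
  - inversion E; subst.
    + inversion H5; subst. eapply E_WhileT; eauto.
    + inversion H5; subst. apply E_WhileF; auto.
Qed.

Lemma steps_eval : forall c s u, steps (c, s) (Skip, u) -> eval c s u.
Proof.
  intros c s u H. apply clos_rt_rt1n in H.
  remember (c, s) as p. remember (Skip, u) as q.
  revert c s Heqp.
  induction H; intros c s Heqp; subst.
  - inversion Heqp; subst. constructor.
  - destruct y as [c' s'].
    pose proof (step_eval _ _ H u) as E. simpl in E. apply E. eapply IHclos_refl_trans_1n; eauto.
Qed.

Lemma steps_seq : forall c1 c2 s t, steps (c1, s) (Skip, t) -> steps (Seq c1 c2, s) (Seq Skip c2, t).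
Proof.
  intros c1 c2 s t H. apply clos_rt_rt1n in H.
  remember (c1, s) as p. remember (Skip, t) as q.
  revert c1 s Heqp.
  induction H; intros c1 s Heqp; subst.
  - inversion Heqp; subst. apply rt_refl.
  - destruct y as [c' s'].
    eapply rt_trans; [apply rt_step; apply st_seq; eassumption|].
    eapply IHclos_refl_trans_1n; eauto.
Qed.

Lemma steps_seq2 : forall c1 c2 s t u, steps (c1, s) (Skip, t) -> steps (c2, t) (Skip, u) ->
  steps (Seq c1 c2, s) (Skip, u).
Proof.
  intros. eapply rt_trans; [apply steps_seq; eassumption|].
  eapply rt_trans; [apply rt_step; apply st_seq_skip| assumption].
Qed.

Lemma eval_steps : forall c s u, eval c s u -> steps (c, s) (Skip, u).
Proof.
  intros c s u H; induction H.
  - apply rt_refl.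
  - apply rt_step; constructor.
  - apply rt_step; constructor.
  - eapply steps_seq2; eauto.
  - eapply rt_trans; [apply rt_step; apply st_if_true; auto| auto].
  - eapply rt_trans; [apply rt_step; apply st_if_false; auto| auto].
  - eapply rt_trans; [apply rt_step; apply st_while|].
    apply rt_step; apply st_if_false; auto.
  - eapply rt_trans; [apply rt_step; apply st_while|].
    eapply rt_trans; [apply rt_step; apply st_if_true; auto|].
    eapply steps_seq2; eauto.
Qed.

Theorem theorem2 (P P' Q S gamma : stmt) (B : bexp) :
  equiv_B P' P B ->
  equiv_B Q P (bnot B) ->
  op_triple P' S (Seq gamma P) ->
  op_triple P (While B S) Q.
Proof.
  intros H1 H2 H3 t [s0 Hs].
  apply steps_eval in Hs. inversion Hs as [| | |c1 c2 a t0 b E1 E2| | | |]; subst.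
  apply eval_steps in E1.
  assert (Hp : pst P t0) by (exists s0; exact E1).
  clear E1 Hs.
  remember (While B S) as w.
  revert Hp Heqw. induction E2; intros Hp Heqw; try discriminate; inversion Heqw; subst.
  - apply H2. split; auto. unfold bnot; rewrite H; reflexivity.
  - match goal with IH : pst P _ -> _ -> pst Q _ |- _ => apply IH; auto end.
    assert (Hp' : pst P' s) by (apply H1; auto).
    destruct Hp' as [s1 Hs1].
    destruct (H3 t) as [s2 Hs2].
    + exists s1. eapply steps_seq2; eauto. apply eval_steps; auto.
    + apply steps_eval in Hs2. inversion Hs2 as [| | |c1 c2 a tm b G1 G2| | | |]; subst.
      exists tm. apply eval_steps; auto.
Qed.
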